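(* Let $K$ be a field, $\mathcal A$ a $K$-algebra, $\vartheta$ any one of the four types (left, right, pre-two-sided, two-sided), and $(M_i)_{i\ge1}$ a sequence of non-trivial $\vartheta$-Mathieu subspaces of $\mathcal A$ with $M_i\subseteq M_{i+1}$ for all $i\ge1$. Assume every element of $\sqrt{\bigcup_{i\ge1}M_i}$ is algebraic over $K$. Then $\bigcup_{i\ge1}M_i$ is a non-trivial $\vartheta$-Mathieu subspace of $\mathcal A$.
   Context: All algebras are associative and unital. $\sqrt S$ is the set of $a\in\mathcal A$ with $a^m\in S$ for all sufficiently large $m$. A subspace is non-trivial if it is neither $0$ nor $\mathcal A$. A $K$-subspace $V$ is a left (resp. right) Mathieu subspace if whenever $a^m\in V$ for all $m\ge1$, then for every $b\in\mathcal A$, $ba^m\in V$ (resp. $a^mb\in V$) for all sufficiently large $m$; pre-two-sided if both left and right; two-sided if whenever $a^m\in V$ for all $m\ge1$, for all $b,c\in\mathcal A$, $ba^mc\in V$ for all sufficiently large $m$. *)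

(* Defs.v *)
From HB Require Import structures.
From mathcomp Require Import all_boot all_order all_algebra.
Set Implicit Arguments. Unset Strict Implicit. Unset Printing Implicit Defensive.
Import GRing.Theory.
Local Open Scope ring_scope.

Section Mathieu.
Variables (K : fieldType) (A : algType K).

Definition is_subspace (V : A -> Prop) : Prop :=
  V 0 /\ (forall x y, V x -> V y -> V (x + y)) /\ (forall (k : K) x, V x -> V (k *: x)).

Definition nontrivial_subspace (V : A -> Prop) : Prop :=
  (exists x, V x /\ x <> 0) /\ (exists x, ~ V x).

Definition radical (S : A -> Prop) : A -> Prop :=
  fun a => exists N : nat, forall m : nat, (N <= m)%N -> S (a ^+ m).

Definition algebraic_over (a : A) : Prop :=
  exists p : {poly K}, p != 0 /\ horner_alg a p = 0.

Inductive mathieu_type := MLeft | MRight | MPreTwoSided | MTwoSided.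

Definition powers_in (V : A -> Prop) (a : A) : Prop :=
  forall m : nat, (1 <= m)%N -> V (a ^+ m).

Definition eventually (P : nat -> Prop) : Prop :=
  exists N : nat, forall m : nat, (N <= m)%N -> P m.

Definition left_mathieu (V : A -> Prop) : Prop :=
  forall a, powers_in V a -> forall b, eventually (fun m => V (b * a ^+ m)).

Definition right_mathieu (V : A -> Prop) : Prop :=
  forall a, powers_in V a -> forall b, eventually (fun m => V (a ^+ m * b)).

Definition two_sided_mathieu (V : A -> Prop) : Prop :=
  forall a, powers_in V a -> forall b c, eventually (fun m => V (b * a ^+ m * c)).

Definition is_mathieu (t : mathieu_type) (V : A -> Prop) : Prop :=
  is_subspace V /\
  match t with
  | MLeft => left_mathieu V
  | MRight => right_mathieu V
  | MPreTwoSided => left_mathieu V /\ right_mathieu V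
  | MTwoSided => two_sided_mathieu V
  end.

End Mathieu.

(* Main.v *)
Require Import Defs.
From HB Require Import structures.
From mathcomp Require Import all_boot all_order all_algebra.
From mathcomp Require Import zify.
Import GRing.Theory.
Local Open Scope ring_scope.

Section Aux.
Variables (K : fieldType) (A : algType K).

Lemma horner_alg_sum (a : A) (p : {poly K}) :
  horner_alg a p = \sum_(i < size p) p`_i *: a ^+ i.
Proof.
rewrite -{1}(coefK p) poly_def linear_sum /=.
apply: eq_bigr => i _; by rewrite linearZ /= rmorphXn /= horner_algX -scalerAl mul1r.
Qed.

Lemma sub_sum (V : A -> Prop) n (f : nat -> A) :
  is_subspace V -> (forall k, (k < n)%N -> V (f k)) -> V (\sum_(k < n) f k).
Proof.
move=> [V0 [VD VZ]]; elim: n => [|n IH] H; first by rewrite big_ord0.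
rewrite big_ord_recr /=; apply: VD; first by apply: IH => k Hk; apply: H; lia.
exact: H.
Qed.

Lemma pow_closed (V : A -> Prop) (a : A) (n : nat) (c : K) (d : nat -> K) :
  is_subspace V -> c != 0 -> c *: a ^+ n = \sum_(k < n) d k *: a ^+ k ->
  (forall j, (1 <= j)%N -> (j <= n)%N -> V (a ^+ j)) ->
  forall m, (1 <= m)%N -> V (a ^+ m).
Proof.
move=> HV c0 Heq Hj m; elim: m {-2}m (leqnn m) => [|m IH] k Hk Hk1.
  lia.
have [kn|nk] := leqP k n; first exact: Hj.
have -> : a ^+ k = c^-1 *: (a ^+ (k - n)%N * (c *: a ^+ n)).
  by rewrite -scalerAr scalerA mulVf // scale1r -exprD subnK //; lia.
case: (HV) => _ [_ VZ]; apply: VZ.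
case: (HV) => V0 [VD VZ]; rewrite Heq mulr_sumr; apply: (big_ind V) => // i _.
rewrite -scalerAr -exprD; apply: VZ; have := ltn_ord i; move=> hi; apply: IH; lia.
Qed.

End Aux.

Theorem proposition4p18 (K : fieldType) (A : algType K) (t : mathieu_type)
  (M : nat -> A -> Prop)
  (hM : forall i : nat, (1 <= i)%N -> is_mathieu t (M i) /\ nontrivial_subspace (M i))
  (hinc : forall i : nat, (1 <= i)%N -> forall x : A, M i x -> M i.+1 x)
  (halg : forall a : A,
     radical (fun x : A => exists2 i : nat, (1 <= i)%N & M i x) a -> algebraic_over a) :
  let U := fun x : A => exists2 i : nat, (1 <= i)%N & M i x in
  is_mathieu t U /\ nontrivial_subspace U.
Proof.
move=> U.
have mono : forall i j x, (1 <= i)%N -> (i <= j)%N -> M i x -> M j x.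
  move=> i j x Hi; elim: j => [|j IH] Hij Hx; first lia.
  have [/eqP <-|ne] := boolP (i == j.+1); first done.
  apply: hinc; [lia | apply: IH => //; lia].
have sub : forall i, (1 <= i)%N -> is_subspace (M i) by move=> i /hM [[]].
have Usub : is_subspace U.
  split; first by exists 1%N => //; case: (sub 1%N isT).
  split.
    move=> x y [i Hi Hx] [j Hj Hy]; exists (maxn i j); first lia.
    case: (sub (maxn i j)) => [|_ [VD _]]; first lia.
    apply: VD; [apply: (mono i) | apply: (mono j)] => //; lia.
  move=> k x [i Hi Hx]; exists i => //; case: (sub i Hi) => _ [_ VZ]; exact: VZ.
have key : forall a, powers_in U a -> exists2 i, (1 <= i)%N & powers_in (M i) a.
  move=> a Ha.
  have [p [p0 hp]] : algebraic_over a.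
    by apply: halg; exists 1%N => m Hm; apply: Ha.
  set n := (size p).-1.
  have [i Hi Hin] : exists2 i, (1 <= i)%N & forall j, (1 <= j)%N -> (j <= n)%N -> M i (a ^+ j).
    elim: n => [|n [i Hi IH]]; first by exists 1%N => // j; lia.
    have [i' Hi' Hx] := Ha n.+1 isT.
    exists (maxn i i'); first lia.
    move=> j Hj1 Hj2; have [jn|nj] := leqP j n.
      apply: (mono i) => //; [lia | exact: IH].
    have -> : j = n.+1 by lia.
    apply: (mono i') => //; lia.
  exists i => //; apply: (@pow_closed K A (M i) a n (lead_coef p)
      (fun k => - p`_k) (sub i Hi)) => //.
    by rewrite lead_coef_eq0.
  move: hp; rewrite horner_alg_sum.
  have sp : size p = n.+1 by rewrite /n prednK // size_poly_gt0.
  rewrite sp big_ord_recr /= lead_coefE sp /= => /eqP; rewrite addrC addr_eq0 => /eqP ->.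
  rewrite -sumrN; apply: eq_bigr => k _; by rewrite scaleNr.
have ev : forall i (f : nat -> A), (1 <= i)%N -> eventually (fun m => M i (f m)) ->
    eventually (fun m => U (f m)).
  by move=> i f Hi [N HN]; exists N => m Hm; exists i => //; apply: HN.
split; last first.
  split.
    have [[x [Hx x0]] _] := (hM 1%N isT).2; exists x; split => //; by exists 1%N.
  exists 1; case=> i Hi H1.
  have [[_ Hm] [_ [y Hy]]] := hM i Hi.
  have P1 : powers_in (M i) 1 by move=> m _; rewrite expr1n.
  apply: Hy; move: Hm; case: t hM => _ /=.
  - move=> HL; have [N HN] := HL 1 P1 y; by move: (HN N (leqnn N)); rewrite expr1n mulr1.
  - move=> HR; have [N HN] := HR 1 P1 y; by move: (HN N (leqnn N)); rewrite expr1n mul1r.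
  - move=> [HL _]; have [N HN] := HL 1 P1 y; by move: (HN N (leqnn N)); rewrite expr1n mulr1.
  - move=> HT; have [N HN] := HT 1 P1 y 1; by move: (HN N (leqnn N)); rewrite expr1n !mulr1.
split => //.
case: t hM => hM'.
- move=> a Ha b; have [i Hi Hp] := key a Ha.
  have [_ HL] := (hM' i Hi).1; exact: ev _ _ Hi (HL a Hp b).
- move=> a Ha b; have [i Hi Hp] := key a Ha.
  have [_ HR] := (hM' i Hi).1; exact: ev _ _ Hi (HR a Hp b).
- split.
  + move=> a Ha b; have [i Hi Hp] := key a Ha.
    have [_ [HL _]] := (hM' i Hi).1; exact: ev _ _ Hi (HL a Hp b).
  + move=> a Ha b; have [i Hi Hp] := key a Ha.
    have [_ [_ HR]] := (hM' i Hi).1; exact: ev _ _ Hi (HR a Hp b).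
- move=> a Ha b c; have [i Hi Hp] := key a Ha.
  have [_ HT] := (hM' i Hi).1; exact: ev _ _ Hi (HT a Hp b c).
Qed.
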